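(* Let $n,m,T$ be positive integers, $\epsilon\ge 0$, and let $x(0),\dots,x(T)\in\mathbb{R}^n$ and $u(0),\dots,u(T-1)\in\mathbb{R}^m$ be given data, with $X_1:=[x(1)\ \cdots\ x(T)]$, $X_0:=[x(0)\ \cdots\ x(T-1)]$, $U_0:=[u(0)\ \cdots\ u(T-1)]$. Define $$\mathcal{C}:=\Big\{(A,B)\in\mathbb{R}^{n\times n}\times\mathbb{R}^{n\times m}:\ \begin{bmatrix} I & A & B\end{bmatrix}\begin{bmatrix} I & X_1\\ 0 & -X_0\\ 0 & -U_0\end{bmatrix}\begin{bmatrix} T\epsilon I & 0\\ 0 & -I\end{bmatrix}\begin{bmatrix} I & X_1\\ 0 & -X_0\\ 0 & -U_0\end{bmatrix}^\top\begin{bmatrix} I & A & B\end{bmatrix}^\top\succeq 0\Big\},$$ and, for $i\in\{0,\dots,T-1\}$, $$\mathcal{C}_i:=\{(A,B)\in\mathbb{R}^{n\times n}\times\mathbb{R}^{n\times m}:\ \epsilon I-(x(i+1)-Ax(i)-Bu(i))(x(i+1)-Ax(i)-Bu(i))^\top\succeq 0\},$$ and $\mathcal{I}:=\bigcap_{i=0}^{T-1}\mathcal{C}_i$. Then $\mathcal{I}\subseteq\mathcal{C}$.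
   Context: $\succeq 0$ denotes positive semidefiniteness. Equivalently, $\mathcal{C}$ is the set of $(A,B)$ for which there exists $D\in\mathbb{R}^{n\times T}$ with $X_1=AX_0+BU_0+D$ and $DD^\top\preceq T\epsilon I$, and $\mathcal{C}_i$ is the set of $(A,B)$ for which $d:=x(i+1)-Ax(i)-Bu(i)$ satisfies $|d|^2\le\epsilon$. *)

(* Defs.v *)
From mathcomp Require Import all_boot all_order all_algebra.
Set Implicit Arguments. Unset Strict Implicit. Unset Printing Implicit Defensive.
Import Order.TTheory GRing.Theory Num.Theory.
Local Open Scope ring_scope.

(* Positive semidefiniteness (the matrices to which it is applied below are
   symmetric): M is PSD iff v^T M v >= 0 for every real column vector v. *)
Definition psd (R : realFieldType) (k : nat) (M : 'M[R]_k) : Prop :=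
  forall v : 'cV[R]_k, 0 <= (v^T *m M *m v) 0 0.

Definition X1mx (R : realFieldType) (n T : nat) (x : nat -> 'cV[R]_n) : 'M[R]_(n, T) :=
  \matrix_(i < n, j < T) x j.+1 i 0.
Definition X0mx (R : realFieldType) (n T : nat) (x : nat -> 'cV[R]_n) : 'M[R]_(n, T) :=
  \matrix_(i < n, j < T) x j i 0.
Definition U0mx (R : realFieldType) (m T : nat) (u : nat -> 'cV[R]_m) : 'M[R]_(m, T) :=
  \matrix_(i < m, j < T) u j i 0.

Definition inC (R : realFieldType) (n m T : nat) (eps : R)
    (x : nat -> 'cV[R]_n) (u : nat -> 'cV[R]_m)
    (A : 'M[R]_n) (B : 'M[R]_(n, m)) : Prop :=
  let IAB : 'M[R]_(n, n + (n + m)) := row_mx 1%:M (row_mx A B) in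
  let Mid : 'M[R]_(n + (n + m), n + T) :=
    col_mx (row_mx 1%:M (X1mx T x))
           (row_mx 0 (col_mx (- X0mx T x) (- U0mx T u))) in
  let W : 'M[R]_(n + T) := block_mx ((T%:R * eps)%:M) 0 0 (- 1%:M) in
  psd (IAB *m Mid *m W *m Mid^T *m IAB^T).

Definition inCi (R : realFieldType) (n m : nat) (eps : R)
    (x : nat -> 'cV[R]_n) (u : nat -> 'cV[R]_m) (i : nat)
    (A : 'M[R]_n) (B : 'M[R]_(n, m)) : Prop :=
  let d := x i.+1 - A *m x i - B *m u i in
  psd (eps%:M - d *m d^T).

(* Main.v *)
Require Import Defs.
From mathcomp Require Import all_boot all_order all_algebra.
Import Order.TTheory GRing.Theory Num.Theory.
Local Open Scope ring_scope.

Theorem proposition3 (R : realFieldType) (n m T : nat)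
    (hn : (0 < n)%N) (hm : (0 < m)%N) (hT : (0 < T)%N)
    (eps : R) (heps : 0 <= eps)
    (x : nat -> 'cV[R]_n) (u : nat -> 'cV[R]_m)
    (A : 'M[R]_n) (B : 'M[R]_(n, m)) :
  (forall i : nat, (i < T)%N -> inCi eps x u i A B) ->
  inC T eps x u A B.
Proof.
move=> HC; rewrite /inC /=.
set D : 'M[R]_(n, T) := X1mx T x - A *m X0mx T x - B *m U0mx T u.
set d := fun j : nat => x j.+1 - A *m x j - B *m u j.
have E1 : row_mx (1%:M : 'M[R]_n) (row_mx A B) *m
    col_mx (row_mx 1%:M (X1mx T x)) (row_mx 0 (col_mx (- X0mx T x) (- U0mx T u)))
    = row_mx 1%:M D.
  rewrite mul_row_col !mul_mx_row mul_row_col !mul1mx mulmx0 add_row_mx addr0.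
  by rewrite /D !mulmxN addrA.
have E2 : D *m D^T = \sum_(j < T) d j *m (d j)^T.
  apply/matrixP=> a b; rewrite !mxE summxE; apply: eq_bigr => j _.
  have Dd : forall c, D c j = d j c 0.
    move=> c; rewrite /D /d !mxE; congr (_ - _ - _).
      by apply: eq_bigr => k _; rewrite !mxE.
    by apply: eq_bigr => k _; rewrite !mxE.
  rewrite [D^T _ _]mxE !Dd [RHS]mxE big_ord1 [(_^T) _ _]mxE.
  by [].
move=> v.
rewrite -(mulmxA _ _ (_^T)) -trmx_mul E1 mul_row_block.
rewrite !mulmx0 mulmxN mulmx1 mul1mx add0r addr0 tr_row_mx mul_row_col.
rewrite trmx1 mulmx1 mulNmx E2.
have -> : (T%:R * eps)%:M - \sum_(j < T) d j *m (d j)^T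
    = \sum_(j < T) (eps%:M - d j *m (d j)^T) :> 'M[R]_n.
  rewrite sumrB; congr (_ - _).
  rewrite sumr_const card_ord.
  apply/matrixP=> a b; rewrite mxE mulmxnE mxE mulr_natl.
  by rewrite -!mulrnA mulnC.
rewrite mulmx_sumr mulmx_suml summxE; apply: sumr_ge0 => j _.
exact: (HC j (ltn_ord j)).
Qed.
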